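(* For each $y\in\mathbb{Z}_p$, the map $S^y:C(\mathbb{Z}_p,\mathbb{C}_p)\to C(\mathbb{Z}_p,\mathbb{C}_p)$ is an isometric automorphism of the $\mathbb{C}_p$-Banach space $C(\mathbb{Z}_p,\mathbb{C}_p)$ (i.e. $\|S^y(\phi)\|=\|\phi\|$ for all $\phi$), with inverse $S^{-y}$.
   Context: Fix a prime $p$. $\mathbb{C}_p$ denotes the completion of an algebraic closure of $\mathbb{Q}_p$, with absolute value $|\cdot|$ normalized by $|p|=1/p$. $C(\mathbb{Z}_p,\mathbb{C}_p)$ is the $\mathbb{C}_p$-Banach space of continuous functions $\mathbb{Z}_p\to\mathbb{C}_p$ with the sup-norm $\|\cdot\|$. For $n\in\mathbb{Z}_{\ge0}$ and $x\in\mathbb{Z}_p$, $\binom{x}{n}=x(x-1)\cdots(x-n+1)/n!$. For $y\in\mathbb{Z}_p$ and $\phi\in C(\mathbb{Z}_p,\mathbb{C}_p)$ define $S^y(\phi)\in C(\mathbb{Z}_p,\mathbb{C}_p)$ by $S^y(\phi)(x)=\sum_{k\ge0}(-1)^k k!\binom yk\binom xk\phi(x-k)$ (the series converges uniformly in $(x,y)$). *)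

(* Defs.v *)
From HB Require Import structures.
From mathcomp Require Import all_boot all_order all_algebra.
From mathcomp Require Import boolp classical_sets reals.
From Stdlib Require Import ClassicalEpsilon.
Set Implicit Arguments. Unset Strict Implicit. Unset Printing Implicit Defensive.
Import Order.TTheory GRing.Theory Num.Theory.
Local Open Scope ring_scope.
Local Open Scope classical_set_scope.

Section PadicDefs.
Variables (R : realType) (K : fieldType) (abs : K -> R).

Definition convK (u : nat -> K) (l : K) : Prop :=
  forall e : R, 0 < e -> exists N : nat, forall n, (N <= n)%N -> abs (u n - l) < e.

Definition cauchyK (u : nat -> K) : Prop :=
  forall e : R, 0 < e -> exists N : nat, forall m n, (N <= m)%N -> (N <= n)%N ->
    abs (u m - u n) < e.

Record padic_abs (p : nat) : Prop := PadicAbs {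
  abs_ge0 : forall x, 0 <= abs x;
  abs_eq0 : forall x, abs x = 0 <-> x = 0;
  absM : forall x y, abs (x * y) = abs x * abs y;
  abs_ultra : forall x y, abs (x + y) <= Num.max (abs x) (abs y);
  abs_p : abs (p%:R) = (p%:R)^-1;
  abs_complete : forall u, cauchyK u -> exists l, convK u l }.

(* Z_p, realized inside K as the closure of the image of Z *)
Definition Zp_set : set K :=
  [set x | forall e : R, 0 < e -> exists z : int, abs (x - z%:~R) < e].

(* continuity on Z_p of a function (only its values on Z_p matter) *)
Definition cont_Zp (f : K -> K) : Prop :=
  forall x, Zp_set x -> forall e : R, 0 < e -> exists2 d : R, 0 < d &
    forall x', Zp_set x' -> abs (x' - x) < d -> abs (f x' - f x) < e.

Definition supnorm (f : K -> K) : R := sup [set abs (f x) | x in Zp_set].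

Definition binomK (x : K) (k : nat) : K :=
  (\prod_(i < k) (x - i%:R)) / (k`!)%:R.

Definition S_term (y : K) (phi : K -> K) (x : K) (k : nat) : K :=
  (-1) ^+ k * (k`!)%:R * binomK y k * binomK x k * phi (x - k%:R).

Definition S_partial (y : K) (phi : K -> K) (x : K) (n : nat) : K :=
  \sum_(k < n) S_term y phi x k.

Definition S_op (y : K) (phi : K -> K) (x : K) : K :=
  epsilon (inhabits 0) (convK (S_partial y phi x)).

End PadicDefs.

(* Main.v *)
Require Import Defs.
From HB Require Import structures.
From mathcomp Require Import all_boot all_order all_algebra.
From mathcomp Require Import boolp classical_sets reals.
From mathcomp Require Import ring lra zify.
From Stdlib Require Import ClassicalEpsilon Classical.
Set Implicit Arguments. Unset Strict Implicit. Unset Printing Implicit Defensive.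
Import Order.TTheory GRing.Theory Num.Theory.
Local Open Scope ring_scope.

Section Padic.
Variables (p : nat) (R : realType) (K : fieldType) (abs : K -> R).
Hypothesis Hp : prime p.
Hypothesis Ha : padic_abs abs p.
Implicit Types (x y z l : K) (phi psi : K -> K) (M e : R).

Let ge0 := abs_ge0 Ha.
Let absM := absM Ha.
Let ultra := abs_ultra Ha.

Lemma abs0 : abs 0 = 0.
Proof. by apply/(abs_eq0 Ha). Qed.

Lemma abs_neq0 x : x != 0 -> 0 < abs x.
Proof.
move=> /eqP nx; rewrite lt_neqAle ge0 andbT; apply/eqP => h.
by apply: nx; apply/(abs_eq0 Ha).
Qed.

Lemma abs1 : abs 1 = 1.
Proof.
have h := absM 1 1; rewrite mulr1 in h.
have hp : 0 < abs 1 by apply: abs_neq0; exact: oner_neq0.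
nra.
Qed.

Lemma absN x : abs (- x) = abs x.
Proof.
have h := absM (-1) (-1); rewrite mulrNN mulr1 abs1 in h.
have h0 := ge0 (-1).
have h1 : abs (-1) = 1 by nra.
by rewrite -mulN1r absM h1 mul1r.
Qed.

Lemma absB x y : abs (x - y) = abs (y - x).
Proof. by rewrite -absN opprB. Qed.

Lemma ultra_le x y e : abs x <= e -> abs y <= e -> abs (x + y) <= e.
Proof. move=> hx hy; apply: le_trans (ultra x y) _; by rewrite ge_max hx hy. Qed.

Lemma ultra_lt x y e : abs x < e -> abs y < e -> abs (x + y) < e.
Proof. move=> hx hy; apply: le_lt_trans (ultra x y) _; by rewrite gt_max hx hy. Qed.

Lemma ultraB_le x y z e : abs (x - y) <= e -> abs (y - z) <= e -> abs (x - z) <= e.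
Proof. move=> h1 h2; have -> : x - z = (x - y) + (y - z) by ring. exact: ultra_le. Qed.

Lemma ultraB_lt x y z e : abs (x - y) < e -> abs (y - z) < e -> abs (x - z) < e.
Proof. move=> h1 h2; have -> : x - z = (x - y) + (y - z) by ring. exact: ultra_lt. Qed.

Lemma abs_sum_le (I : Type) (r : seq I) (P : pred I) (F : I -> K) e :
  0 <= e -> (forall i, P i -> abs (F i) <= e) -> abs (\sum_(i <- r | P i) F i) <= e.
Proof.
move=> e0 h; apply: (big_ind (fun x => abs x <= e)) => //.
  by rewrite abs0.
by move=> x y hx hy; apply: ultra_le.
Qed.

Lemma abs_natr n : abs (n%:R) <= 1.
Proof.
elim: n => [|n IH]; first by rewrite abs0.
by rewrite -addn1 natrD; apply: ultra_le => //; rewrite abs1.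
Qed.

Lemma abs_intr (z : int) : abs (z%:~R) <= 1.
Proof. case: z => n; first by rewrite -pmulrn abs_natr. by rewrite NegzE mulrNz absN abs_natr. Qed.

Lemma p_gt1 : (1 < p)%N. Proof. exact: prime_gt1. Qed.

Lemma absp : abs (p%:R) = (p%:R)^-1. Proof. exact: abs_p Ha. Qed.

Lemma absp_lt1 : abs (p%:R) < 1.
Proof.
rewrite absp invf_lt1; last by rewrite ltr0n ltnW // p_gt1.
by rewrite ltr1n p_gt1.
Qed.

Lemma absX x n : abs (x ^+ n) = abs x ^+ n.
Proof. elim: n => [|n IH]; by rewrite ?expr0 ?abs1 // !exprS absM IH. Qed.

Lemma natr_neq0 n : (0 < n)%N -> n%:R != 0 :> K.
Proof.
move=> n0; apply/negP => /eqP hn.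
have [q hq] := natf0_pchar n0 (introT eqP hn).
have qpr := pcharf_prime hq; have q0 := pcharf0 hq.
case: (eqVneq q p) => [eqp | neqp].
  have := absp; rewrite -eqp q0 abs0 => /esym/eqP; rewrite invr_eq0.
  rewrite pnatr_eq0 eqp; by case: (p) (prime_gt0 Hp).
have cop : coprime q p by rewrite prime_coprime // dvdn_prime2.
have [a _ ha] := Bezoutl p (prime_gt0 qpr).
rewrite (eqP cop) in ha.
case/dvdnP: ha => b hb.
have : (1 + a * p)%:R = (b * q)%:R :> K by rewrite hb.
rewrite natrM q0 mulr0 natrD natrM => h1.
have h3 : (1 : K) = - (a%:R * p%:R) by apply/eqP; rewrite -subr_eq0 opprK h1.
have : abs (1 : K) = abs (a%:R * p%:R) by rewrite {1}h3 absN.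
rewrite abs1 absM => h2.
have := abs_natr a; have := absp_lt1; have := ge0 (a%:R); have := ge0 (p%:R).
nra.
Qed.


Lemma absV x : abs (x^-1) = (abs x)^-1.
Proof.
case: (eqVneq x 0) => [->|nx]; first by rewrite invr0 abs0 invr0.
have h := absM x x^-1; rewrite (mulfV nx) abs1 in h.
have hx := @abs_neq0 x nx.
apply: (mulfI (lt0r_neq0 hx)); by rewrite -h mulfV // lt0r_neq0.
Qed.

Lemma absp_gt0 : 0 < abs (p%:R).
Proof. by apply: abs_neq0; apply: natr_neq0; exact: prime_gt0. Qed.

Lemma abs_fact_gt0 k : 0 < abs (k`!%:R).
Proof. by apply: abs_neq0; apply: natr_neq0; exact: fact_gt0. Qed.

Lemma abs_factS k : abs ((k.+1)`!%:R) <= abs (k`!%:R).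
Proof.
rewrite factS natrM absM; have := abs_natr k.+1; have := ge0 (k`!%:R);
  have := ge0 (k.+1%:R); nra.
Qed.

Lemma abs_fact_mono k m : (k <= m)%N -> abs (m`!%:R) <= abs (k`!%:R).
Proof.
move=> /subnK <-; elim: (m - k)%N => [|n IH] //.
by rewrite addSn; apply: le_trans (abs_factS _) IH.
Qed.

Lemma abs_fact_pm m : abs ((p * m)`!%:R) <= abs (p%:R) ^+ m.
Proof.
elim: m => [|m IH]; first by rewrite muln0 expr0 abs1.
have hle : (p <= p * m.+1)%N by rewrite leq_pmulr.
have e : (p * m.+1 - p = p * m)%N by rewrite mulnS addKn.
rewrite -(bin_fact hle) e !natrM !absM exprS.
have hp : abs (p`!%:R) <= abs (p%:R).
  have -> : p = (p.-1).+1 by rewrite prednK // prime_gt0.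
  rewrite factS natrM absM; have := abs_natr (p.-1)`!; have := ge0 (p.-1.+1%:R);
    have := ge0 ((p.-1)`!%:R); nra.
have := abs_natr 'C(p * m.+1, p); have := ge0 'C(p * m.+1, p)%:R.
have := ge0 (p`!%:R); have := ge0 ((p * m)`!%:R); have := absp_gt0.
have : 0 <= abs (p%:R) ^+ m by rewrite exprn_ge0.
move: hp IH; set A := abs (p`!%:R); set B := abs ((p * m)`!%:R); set C := abs ('C(_,_)%:R).
set P := abs (p%:R); set Q := P ^+ m => h1 h2 h3 h4 h5 h6 h7 h8.
have : A * B <= P * Q by apply: ler_pM.
have : C * (A * B) <= 1 * (A * B) by apply: ler_wpM2r => //; apply: mulr_ge0.
rewrite mul1r mulrA; move=> h9 h10; exact: le_trans h9 h10.
Qed.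

Lemma absp_pow_small {e} : 0 < e -> exists m, abs (p%:R) ^+ m < e.
Proof.
move=> e0; exists (Num.bound (e^-1)).
set m := Num.bound _.
have hb : e^-1 < m%:R by apply: archi_boundP; rewrite invr_ge0 ltW.
rewrite absp exprVn -natrX.
have hpm : (m < p ^ m)%N by apply: ltn_expl; exact: p_gt1.
have hpos : 0 < (p ^ m)%:R :> R by rewrite ltr0n expn_gt0 prime_gt0.
rewrite -[e]invrK ltf_pV2 ?posrE ?invr_gt0 //.
apply: lt_trans hb _; by rewrite ltr_nat.
Qed.

Lemma fact_small {e} : 0 < e -> exists N, forall k, (N <= k)%N -> abs (k`!%:R) < e.
Proof.
move=> e0; have [m hm] := absp_pow_small e0.
exists (p * m)%N => k hk.
apply: le_lt_trans (abs_fact_mono hk) _; exact: le_lt_trans (abs_fact_pm m) hm.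
Qed.


Notation Zp := (Zp_set abs).

Lemma Zp_int (z : int) : Zp (z%:~R).
Proof. by move=> e e0; exists z; rewrite subrr abs0. Qed.

Lemma Zp_nat (n : nat) : Zp (n%:R).
Proof. exact: (Zp_int n). Qed.

Lemma Zp_le1 x : Zp x -> abs x <= 1.
Proof.
move=> /(_ 1 ltr01) [z hz]; have -> : x = (x - z%:~R) + z%:~R by ring.
by apply: ultra_le; [exact: ltW | exact: abs_intr].
Qed.

Lemma ZpD x y : Zp x -> Zp y -> Zp (x + y).
Proof.
move=> hx hy e e0; have [z1 h1] := hx e e0; have [z2 h2] := hy e e0.
exists (z1 + z2); rewrite intrD.
have -> : x + y - (z1%:~R + z2%:~R) = (x - z1%:~R) + (y - z2%:~R) by ring.
exact: ultra_lt.
Qed.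

Lemma ZpN x : Zp x -> Zp (- x).
Proof.
move=> hx e e0; have [z h] := hx e e0; exists (- z).
by rewrite intrN -opprD absN.
Qed.

Lemma ZpB x y : Zp x -> Zp y -> Zp (x - y).
Proof. by move=> hx hy; apply: ZpD => //; apply: ZpN. Qed.

Lemma ZpM x y : Zp x -> Zp y -> Zp (x * y).
Proof.
move=> hx hy e e0; have [z1 h1] := hx e e0; have [z2 h2] := hy e e0.
exists (z1 * z2); rewrite intrM.
have -> : x * y - z1%:~R * z2%:~R = x * (y - z2%:~R) + (x - z1%:~R) * z2%:~R by ring.
apply: ultra_lt; rewrite absM.
  have := Zp_le1 hx; have := ge0 x; have := ge0 (y - z2%:~R); nra.
have := abs_intr z2; have := ge0 (z2%:~R); have := ge0 (x - z1%:~R); nra.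
Qed.

Lemma Zp_lim (u : nat -> K) l : (forall n, Zp (u n)) -> convK abs u l -> Zp l.
Proof.
move=> hu hc e e0; have [N hN] := hc e e0.
have [z hz] := hu N e e0; exists z.
apply: (@ultraB_lt _ (u N)) => //; rewrite absB; exact: hN.
Qed.

Lemma Zp_approx x n : Zp x -> exists a : nat, (a < p ^ n)%N /\ abs (x - a%:R) <= abs (p%:R) ^+ n.
Proof.
move=> hx; have e0 : 0 < abs (p%:R) ^+ n by rewrite exprn_gt0 // absp_gt0.
have [z hz] := hx _ e0.
set P : int := (p ^ n)%:Z.
have P0 : 0 < P by rewrite ltz_nat expn_gt0 prime_gt0.
have hm0 : 0 <= (z %% P)%Z by apply: modz_ge0; rewrite lt0r_neq0.
exists `|(z %% P)%Z|%N.
have ha : (`|(z %% P)%Z|%N : int) = (z %% P)%Z by rewrite gez0_abs.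
split.
  by rewrite -ltz_nat ha; apply: ltz_pmod.
have hz' : z%:~R = (z %/ P)%Z%:~R * (p%:R ^+ n) + (`|(z %% P)%Z|%N)%:R :> K.
  rewrite -natrX.
  have -> : (`|(z %% P)%Z|%N)%:R = ((`|(z %% P)%Z|%N : int)%:~R : K) by [].
  rewrite ha.
  have -> : ((p ^ n)%:R : K) = P%:~R by [].
  by rewrite -intrM -intrD -divz_eq.
have -> : x - (`|(z %% P)%Z|%N)%:R = (x - z%:~R) + (z %/ P)%Z%:~R * (p%:R ^+ n).
  by rewrite hz'; ring.
apply: ultra_le; first exact: ltW.
rewrite absM absX; have := abs_intr (z %/ P)%Z; have := ge0 ((z %/ P)%Z%:~R).
have : 0 <= abs (p%:R) ^+ n by exact: ltW. nra.
Qed.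

Definition Pf (x : K) (k : nat) : K := \prod_(i < k) (x - i%:R).

Lemma PfS x k : Pf x k.+1 = Pf x k * (x - k%:R).
Proof. by rewrite /Pf big_ord_recr. Qed.

Lemma binomK_Pf x k : binomK x k = Pf x k / k`!%:R.
Proof. by []. Qed.

Lemma Pf_nat (a k : nat) : Pf (a%:R) k = (a ^_ k)%:R.
Proof.
elim: k => [|k IH]; first by rewrite /Pf big_ord0 ffactn0.
rewrite PfS IH ffactnSr natrM.
case: (leqP k a) => hk; first by rewrite natrB.
by rewrite ffact_small // !mul0r.
Qed.

Lemma binom_nat (a k : nat) : binomK (a%:R : K) k = 'C(a, k)%:R.
Proof.
have hf : (k`!)%:R != 0 :> K by apply: natr_neq0; exact: fact_gt0.
by rewrite binomK_Pf Pf_nat -bin_ffact natrM (mulfK hf).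
Qed.

Lemma abs_Pf_le1 x k : abs x <= 1 -> abs (Pf x k) <= 1.
Proof.
move=> hx; elim: k => [|k IH]; first by rewrite /Pf big_ord0 abs1.
rewrite PfS absM.
have h : abs (x - k%:R) <= 1 by apply: ultra_le => //; rewrite absN abs_natr.
have := ge0 (Pf x k); have := ge0 (x - k%:R); nra.
Qed.

Lemma Pf_diff x z k : abs x <= 1 -> abs z <= 1 -> abs (Pf x k - Pf z k) <= abs (x - z).
Proof.
move=> hx hz; elim: k => [|k IH]; first by rewrite /Pf !big_ord0 subrr abs0 ge0.
rewrite !PfS.
have -> : Pf x k * (x - k%:R) - Pf z k * (z - k%:R) =
  (Pf x k - Pf z k) * (x - k%:R) + Pf z k * (x - z) by ring.
have h : abs (x - k%:R) <= 1 by apply: ultra_le => //; rewrite absN abs_natr.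
have hPz := abs_Pf_le1 k hz.
apply: ultra_le; rewrite absM.
  have := ge0 (Pf x k - Pf z k); have := ge0 (x - k%:R); nra.
have := ge0 (Pf z k); have := ge0 (x - z); nra.
Qed.

Lemma binom_diff x z k : abs x <= 1 -> abs z <= 1 ->
  abs (binomK x k - binomK z k) <= abs (x - z) / abs (k`!%:R).
Proof.
move=> hx hz; rewrite !binomK_Pf -mulrBl absM absV.
apply: ler_wpM2r; first by rewrite invr_ge0 ge0.
exact: Pf_diff.
Qed.

Lemma binom_le1 x k : Zp x -> abs (binomK x k) <= 1.
Proof.
move=> hx; have [n hn] := absp_pow_small (abs_fact_gt0 k).
have [a [_ ha]] := Zp_approx n hx.
have -> : binomK x k = binomK (a%:R) k + (binomK x k - binomK (a%:R) k) by ring.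
apply: ultra_le; first by rewrite binom_nat abs_natr.
apply: le_trans (binom_diff k (Zp_le1 hx) (Zp_le1 (Zp_nat a))) _.
rewrite ler_pdivrMr ?abs_fact_gt0 // mul1r.
exact: le_trans ha (ltW hn).
Qed.


Lemma convK_uniq u l1 l2 : convK abs u l1 -> convK abs u l2 -> l1 = l2.
Proof.
move=> h1 h2; apply/eqP; rewrite -subr_eq0; apply/negP => /negP nz.
have e0 := abs_neq0 nz.
have [N1 hN1] := h1 _ e0; have [N2 hN2] := h2 _ e0.
have : abs (l1 - l2) < abs (l1 - l2).
  apply: (@ultraB_lt _ (u (maxn N1 N2))).
    by rewrite absB; apply: hN1; rewrite leq_maxl.
  by apply: hN2; rewrite leq_maxr.
by rewrite ltxx.
Qed.

Lemma tail_conv (s : nat -> K) (B : nat -> R) :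
  (forall e, 0 < e -> exists N, B N < e) ->
  (forall m n, (m <= n)%N -> abs (s n - s m) <= B m) ->
  exists l, convK abs s l /\ forall m, abs (l - s m) <= B m.
Proof.
move=> hB hs.
have hc : cauchyK abs s.
  move=> e e0; have [N hN] := hB e e0; exists N => m n hm hn.
  apply: (@ultraB_lt _ (s N)).
    exact: le_lt_trans (hs _ _ hm) hN.
  by rewrite absB; exact: le_lt_trans (hs _ _ hn) hN.
have [l hl] := abs_complete Ha hc.
exists l; split => // m.
rewrite leNgt; apply/negP => hlt.
have e0 : 0 < abs (l - s m) by apply: le_lt_trans hlt; apply: le_trans (hs m m (leqnn m)); exact: ge0.
have [N hN] := hl _ e0.
have : abs (l - s m) < abs (l - s m).
  apply: (@ultraB_lt _ (s (maxn N m))).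
    by rewrite absB; apply: hN; rewrite leq_maxl.
  by apply: le_lt_trans (hs _ _ _) hlt; rewrite leq_maxr.
by rewrite ltxx.
Qed.

Lemma conv_eps u l : convK abs u l -> convK abs u (epsilon (inhabits 0) (convK abs u)).
Proof. by move=> h; apply: epsilon_spec; exists l. Qed.

Definition bnd (phi : K -> K) (M : R) := forall x, Zp x -> abs (phi x) <= M.

Lemma S_term_bound y phi M x k : Zp y -> Zp x -> bnd phi M ->
  abs (S_term y phi x k) <= abs (k`!%:R) * M.
Proof.
move=> hy hx hM; rewrite /S_term 4!absM absX absN abs1 expr1n mul1r.
have h1 := binom_le1 k hy; have h2 := binom_le1 k hx.
have h3 := hM _ (ZpB hx (Zp_nat k)).
have hb : abs (binomK y k) * abs (binomK x k) <= 1.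
  by rewrite -[1]mulr1; apply: ler_pM => //; exact: ge0.
have hc : abs (k`!%:R) * (abs (binomK y k) * abs (binomK x k)) <= abs (k`!%:R).
  by rewrite -{2}[abs (k`!%:R)]mulr1; apply: ler_wpM2l => //; exact: ge0.
apply: ler_pM => //; last by rewrite -mulrA.
  by rewrite -mulrA; apply: mulr_ge0; [exact: ge0| apply: mulr_ge0; exact: ge0].
Qed.

Lemma S_partial_split y phi x m n : (m <= n)%N ->
  S_partial y phi x n = S_partial y phi x m + \sum_(m <= k < n) S_term y phi x k.
Proof.
move=> hmn; rewrite /S_partial -!(big_mkord xpredT (S_term y phi x)).
by rewrite (@big_cat_nat _ _ _ m 0 n _ _ (leq0n m) hmn).
Qed.

Lemma S_tail y phi M x m n : Zp y -> Zp x -> bnd phi M -> 0 <= M -> (m <= n)%N ->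
  abs (S_partial y phi x n - S_partial y phi x m) <= abs (m`!%:R) * M.
Proof.
move=> hy hx hM M0 hmn; rewrite (S_partial_split _ _ _ hmn) addrC addKr.
rewrite big_nat_cond; apply: abs_sum_le; first by apply: mulr_ge0; [exact: ge0|].
move=> k /andP [/andP [hk _] _].
apply: le_trans (S_term_bound k hy hx hM) _.
by apply: ler_wpM2r => //; exact: abs_fact_mono.
Qed.

Lemma fact_smallM M e : 0 <= M -> 0 < e -> exists N, abs (N`!%:R) * M < e.
Proof.
move=> M0 e0; have e1 : 0 < e / (M + 1) by apply: divr_gt0 => //; lra.
have [N hN] := fact_small e1; exists N; have := hN N (leqnn N).
rewrite ltr_pdivlMr; last by lra.
have := ge0 (N`!%:R); nra.
Qed.

Lemma S_conv y phi M x : Zp y -> Zp x -> bnd phi M -> 0 <= M ->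
  convK abs (S_partial y phi x) (S_op abs y phi x) /\
  forall m, abs (S_op abs y phi x - S_partial y phi x m) <= abs (m`!%:R) * M.
Proof.
move=> hy hx hM M0.
have [l [hl hb]] : exists l, convK abs (S_partial y phi x) l /\
    forall m, abs (l - S_partial y phi x m) <= abs (m`!%:R) * M.
  apply: tail_conv; first by move=> e e0; exact: fact_smallM.
  by move=> m n hmn; apply: S_tail.
have hS := conv_eps hl.
have <- : l = S_op abs y phi x by apply: convK_uniq hl hS.
by split.
Qed.

Lemma S_bound y phi M x : Zp y -> Zp x -> bnd phi M -> 0 <= M -> abs (S_op abs y phi x) <= M.
Proof.
move=> hy hx hM M0; have [_ h] := S_conv hy hx hM M0.
by have := h 0%N; rewrite /S_partial big_ord0 subr0 fact0 abs1 mul1r.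
Qed.


Lemma abs_sum_lt (I : Type) (r : seq I) (P : pred I) (F : I -> K) e :
  0 < e -> (forall i, P i -> abs (F i) < e) -> abs (\sum_(i <- r | P i) F i) < e.
Proof.
move=> e0 h; apply: (big_ind (fun x => abs x < e)) => //.
  by rewrite abs0.
by move=> x y hx hy; apply: ultra_lt.
Qed.

Lemma finite_min (N : nat) (P : nat -> R -> Prop) :
  (forall k d d', 0 < d' -> d' <= d -> P k d -> P k d') ->
  (forall k, (k < N)%N -> exists2 d, 0 < d & P k d) ->
  exists2 d, 0 < d & forall k, (k < N)%N -> P k d.
Proof.
move=> hmono; elim: N => [|N IH] h; first by exists 1.
have [d1 d10 h1] : exists2 d, 0 < d & forall k, (k < N)%N -> P k d.
  by apply: IH => k hk; apply: h; exact: ltnW.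
have [d2 d20 h2] := h N (ltnSn N).
exists (Num.min d1 d2); first by rewrite lt_min d10 d20.
move=> k; rewrite ltnS leq_eqVlt => /orP [/eqP -> | hk].
  apply: (hmono _ d2); rewrite ?lt_min ?d10 ?d20 ?ge_min ?lexx ?orbT //.
apply: (hmono _ d1); rewrite ?lt_min ?d10 ?d20 ?ge_min ?lexx ?orbT //; exact: h1.
Qed.

Lemma term_cont y phi M x k e : Zp y -> Zp x -> bnd phi M -> 0 <= M ->
  cont_Zp abs phi -> 0 < e ->
  exists2 d, 0 < d & forall x', Zp x' -> abs (x' - x) < d ->
    abs (S_term y phi x' k - S_term y phi x k) < e.
Proof.
move=> hy hx hM M0 hc e0.
have hxk := ZpB hx (Zp_nat k).
have [d1 d10 hd1] := hc _ hxk e e0.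
have A0 := abs_fact_gt0 k.
set d2 := e * abs (k`!%:R) / (M + 1).
have d20 : 0 < d2 by rewrite /d2; apply: divr_gt0; [apply: mulr_gt0 | lra].
exists (Num.min d1 d2); first by rewrite lt_min d10 d20.
move=> x' hx' hd; move: hd; rewrite lt_min => /andP [hdd1 hdd2].
set c := (-1) ^+ k * (k`!)%:R * binomK y k.
have hc1 : abs c <= 1.
  rewrite /c 2!absM absX absN abs1 expr1n mul1r.
  have := binom_le1 k hy; have := ge0 (binomK y k).
  have : abs (k`!%:R) <= 1 by exact: abs_natr.
  have := ge0 (k`!%:R); nra.
rewrite /S_term -/c.
set b' := binomK x' k; set b := binomK x k.
set f' := phi (x' - k%:R); set f := phi (x - k%:R).
have -> : c * b' * f' - c * b * f = c * (b' * (f' - f) + (b' - b) * f) by ring.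
rewrite absM.
have hY : abs (b' * (f' - f) + (b' - b) * f) < e.
  apply: ultra_lt; rewrite absM.
    have hb' : abs b' <= 1 by exact: binom_le1.
    have hff : abs (f' - f) < e.
      apply: hd1; first exact: ZpB hx' (Zp_nat k).
      by have -> : x' - k%:R - (x - k%:R) = x' - x by ring.
    have := ge0 b'; have := ge0 (f' - f); nra.
  have hbb : abs (b' - b) <= abs (x' - x) / abs (k`!%:R).
    exact: binom_diff (Zp_le1 hx') (Zp_le1 hx).
  have hf : abs f <= M by exact: hM.
  have hq : abs (x' - x) / abs (k`!%:R) < e / (M + 1).
    rewrite ltr_pdivrMr // mulrAC; move: hdd2; rewrite /d2.
    by rewrite -mulrA [abs _ / _]mulrC mulrA.
  have hbb2 : abs (b' - b) < e / (M + 1) by exact: le_lt_trans hbb hq.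
  have h3 : e / (M + 1) * M < e.
    rewrite mulrAC ltr_pdivrMr; last by lra.
    nra.
  have := ge0 (b' - b); have := ge0 f.
  have : 0 <= e / (M + 1) by apply: divr_ge0; lra.
  nra.
have := ge0 c; have := ge0 (b' * (f' - f) + (b' - b) * f); nra.
Qed.

Lemma S_cont y phi M : Zp y -> bnd phi M -> 0 <= M -> cont_Zp abs phi ->
  cont_Zp abs (S_op abs y phi).
Proof.
move=> hy hM M0 hc x hx e e0.
have [N hN] := fact_smallM M0 e0.
have [d d0 hd] : exists2 d, 0 < d & forall k, (k < N)%N -> forall x', Zp x' ->
    abs (x' - x) < d -> abs (S_term y phi x' k - S_term y phi x k) < e.
  apply: finite_min.
    move=> k d1 d1' _ hle h x' hx' hlt; apply: h => //; exact: lt_le_trans hlt hle.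
  move=> k _; exact: (term_cont k hy hx hM M0 hc e0).
exists d => // x' hx' hlt.
have [_ h1] := S_conv hy hx' hM M0; have [_ h2] := S_conv hy hx hM M0.
have -> : S_op abs y phi x' - S_op abs y phi x =
  (S_op abs y phi x' - S_partial y phi x' N) +
  ((S_partial y phi x' N - S_partial y phi x N) +
   (S_partial y phi x N - S_op abs y phi x)) by ring.
apply: ultra_lt; first exact: le_lt_trans (h1 N) hN.
apply: ultra_lt; last by rewrite absB; exact: le_lt_trans (h2 N) hN.
rewrite /S_partial -sumrB; apply: abs_sum_lt => // k _.
exact: hd.
Qed.


Notation P := (abs (p%:R : K)).

Lemma P_ge0 : 0 <= P. Proof. exact: ge0. Qed.

Lemma P_le1 : P <= 1. Proof. exact: ltW absp_lt1. Qed.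

Lemma Pn_ge0 n : 0 <= P ^+ n. Proof. by rewrite exprn_ge0 // P_ge0. Qed.

Lemma PS_le n : P ^+ n.+1 <= P ^+ n.
Proof. rewrite exprS; have := P_le1; have := P_ge0; have := Pn_ge0 n; nra. Qed.

Lemma P_mono m n : (m <= n)%N -> P ^+ n <= P ^+ m.
Proof.
move=> /subnK <-; elim: (n - m)%N => [|k IH] //.
by rewrite addSn; exact: le_trans (PS_le _) IH.
Qed.

Definition bad phi c n := forall M, exists x, [/\ Zp x, abs (x - c) <= P ^+ n & M < abs (phi x)].

Lemma finite_max (N : nat) (Q : nat -> R -> Prop) :
  (forall k d d', d <= d' -> Q k d -> Q k d') ->
  (forall k, (k < N)%N -> exists d, Q k d) ->
  exists d, forall k, (k < N)%N -> Q k d.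
Proof.
move=> hmono; elim: N => [|N IH] h; first by exists 0.
have [d1 h1] : exists d, forall k, (k < N)%N -> Q k d.
  by apply: IH => k hk; apply: h; exact: ltnW.
have [d2 h2] := h N (ltnSn N).
exists (Num.max d1 d2).
move=> k; rewrite ltnS leq_eqVlt => /orP [/eqP -> | hk].
  apply: (hmono _ d2); rewrite ?le_max ?lexx ?orbT //.
apply: (hmono _ d1); rewrite ?le_max ?lexx ?orbT //; exact: h1.
Qed.

Lemma bad_step phi c n : bad phi c n ->
  exists c', [/\ Zp c', abs (c' - c) <= P ^+ n & bad phi c' n.+1].
Proof.
move=> hb; apply: NNPP => hno.
have hQ : forall a, (a < p ^ n.+1)%N -> exists M, (abs (a%:R - c) <= P ^+ n ->
    forall x, Zp x -> abs (x - a%:R) <= P ^+ n.+1 -> abs (phi x) <= M).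
  move=> a _; case: (classic (abs (a%:R - c) <= P ^+ n)) => hac; last by exists 0.
  have nb : ~ bad phi (a%:R) n.+1 by move=> hb'; apply: hno; exists (a%:R); split => //; exact: Zp_nat.
  have [M hM] := not_all_ex_not _ _ nb.
  exists M => _ x hx hxa; rewrite leNgt; apply/negP => hlt.
  by apply: hM; exists x; split.
have [M hM] := finite_max (fun k d d' hdd' h hac x hx hxa => le_trans (h hac x hx hxa) hdd') hQ.
have [x [hx hxc hMx]] := hb M.
have [a [ha hxa]] := Zp_approx n.+1 hx.
have hac : abs (a%:R - c) <= P ^+ n.
  apply: (@ultraB_le _ x); last by [].
  by rewrite absB; exact: le_trans hxa (PS_le n).
have := hM a ha hac x hx hxa.
by rewrite leNgt hMx.
Qed.

Definition next phi n c :=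
  epsilon (inhabits 0) (fun c' => [/\ Zp c', abs (c' - c) <= P ^+ n & bad phi c' n.+1]).

Fixpoint cseq phi n : K :=
  match n with 0 => 0 | n'.+1 => next phi n' (cseq phi n') end.

Lemma next_spec phi n c : bad phi c n ->
  [/\ Zp (next phi n c), abs (next phi n c - c) <= P ^+ n & bad phi (next phi n c) n.+1].
Proof. move=> hb; exact: (epsilon_spec (inhabits (0:K)) _ (bad_step hb)). Qed.

Lemma cseq_spec phi : bad phi 0 0 -> forall n,
  Zp (cseq phi n) /\ bad phi (cseq phi n) n /\ abs (cseq phi n.+1 - cseq phi n) <= P ^+ n.
Proof.
move=> h0; elim => [|n IH].
  case: (next_spec h0) => _ hh _; split; first exact: (Zp_nat 0).
  by split.
case: IH => _ [hb _].
case: (next_spec hb) => hz _ hb'; split => //; split => //.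
by case: (next_spec hb').
Qed.

Lemma cont_bnd phi : cont_Zp abs phi -> exists M, 0 <= M /\ bnd phi M.
Proof.
move=> hc; apply: NNPP => hno.
have h0 : bad phi 0 0.
  move=> M; apply: NNPP => hM; apply: hno; exists (Num.max M 0); split.
    by rewrite le_max lexx orbT.
  move=> x hx; rewrite le_max; apply/orP; left.
  rewrite leNgt; apply/negP => hlt; apply: hM; exists x; split => //.
  by rewrite subr0 expr0; exact: Zp_le1.
have hs := cseq_spec h0.
have htail : forall m n, (m <= n)%N -> abs (cseq phi n - cseq phi m) <= P ^+ m.
  move=> m n /subnK <-; elim: (n - m)%N => [|k IH]; first by rewrite add0n subrr abs0 Pn_ge0.
  rewrite addSn; apply: (@ultraB_le _ (cseq phi (k + m))) => //.
  have [_ [_ h]] := hs (k + m)%N; apply: le_trans h _; apply: P_mono; exact: leq_addl.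
have [L [hL hLb]] : exists L, convK abs (cseq phi) L /\ forall m, abs (L - cseq phi m) <= P ^+ m.
  apply: tail_conv => //; move=> e e0; exact: absp_pow_small.
have hLz : Zp L by apply: Zp_lim hL => n; case: (hs n).
have [d d0 hd] := hc L hLz 1 ltr01.
have [m hm] := absp_pow_small d0.
have [_ [hbm _]] := hs m.
have [x [hx hxc hMx]] := hbm (abs (phi L) + 1).
have hxL : abs (x - L) < d.
  apply: le_lt_trans hm; apply: (@ultraB_le _ (cseq phi m)) => //; by rewrite absB.
have h1 := hd x hx hxL.
have : abs (phi x) < abs (phi L) + 1.
  have -> : phi x = (phi x - phi L) + phi L by ring.
  apply: le_lt_trans (ultra _ _) _; rewrite gt_max; apply/andP; split.
    by have := ge0 (phi L); lra.
  lra.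
lra.
Qed.


Lemma Pf_add x k j : Pf x (k + j) = Pf x k * Pf (x - k%:R) j.
Proof.
elim: j => [|j IH]; first by rewrite addn0 /Pf big_ord0 mulr1.
by rewrite addnS !PfS IH natrD; ring.
Qed.

Lemma fact_neq0 k : (k`!)%:R != 0 :> K.
Proof. apply: natr_neq0; exact: fact_gt0. Qed.

Lemma fact_binom x k : (k`!)%:R * binomK x k = Pf x k.
Proof. by rewrite binomK_Pf mulrC (divfK (fact_neq0 k)). Qed.

Lemma Pf_binom a b n : Pf (a + b) n =
  \sum_(0 <= k < n.+1) 'C(n, k)%:R * (Pf a k * Pf b (n - k)).
Proof.
elim: n => [|n IH]; first by rewrite big_nat1 /Pf !big_ord0 bin0 !mulr1.
set F := fun k => Pf a k * Pf b (n.+1 - k).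
have eR : \sum_(0 <= k < n.+2) 'C(n.+1, k)%:R * (Pf a k * Pf b (n.+1 - k)) =
    \sum_(0 <= k < n.+2) 'C(n.+1, k)%:R * F k by [].
rewrite eR PfS IH big_distrl /=.
have e1 : \sum_(0 <= k < n.+1) 'C(n, k)%:R * (Pf a k * Pf b (n - k)) * (a + b - n%:R) =
  \sum_(0 <= k < n.+1) ('C(n, k)%:R * F k.+1 + 'C(n, k)%:R * F k).
  apply: eq_big_nat => k /andP [_ hk]; rewrite ltnS in hk.
  rewrite /F subSS (subSn hk) !PfS natrB //; ring.
rewrite e1 big_split /=.
rewrite (big_nat_recl _ _ _ (leq0n n.+1)) bin0.
have e2 : \sum_(0 <= i < n.+1) 'C(n.+1, i.+1)%:R * F i.+1 =
  \sum_(0 <= i < n.+1) 'C(n, i.+1)%:R * F i.+1 + \sum_(0 <= i < n.+1) 'C(n, i)%:R * F i.+1.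
  rewrite -big_split /=; apply: eq_big_nat => i _; by rewrite binS natrD mulrDl.
rewrite e2.
rewrite [\sum_(0 <= k < n.+1) 'C(n, k)%:R * F k](big_nat_recl _ _ _ (leq0n n)) bin0.
rewrite [\sum_(0 <= i < n.+1) 'C(n, i.+1)%:R * F i.+1](big_nat_recr _ _ _ (leq0n n)) /=.
rewrite bin_small // mul0r addr0.
set X := \sum_(0 <= i < n.+1) 'C(n, i)%:R * F i.+1.
set Y := \sum_(0 <= i < n) 'C(n, i.+1)%:R * F i.+1.
rewrite mul1r; ring.
Qed.

Lemma binom_vander (a b : K) n :
  \sum_(0 <= k < n.+1) binomK a k * binomK b (n - k) = binomK (a + b) n.
Proof.
apply: (mulfI (fact_neq0 n)); rewrite fact_binom Pf_binom big_distrr /=.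
apply: eq_big_nat => k /andP [_ hk]; rewrite ltnS in hk.
rewrite -(bin_fact hk) !natrM -(fact_binom a k) -(fact_binom b (n - k)); ring.
Qed.

Lemma binom0 n : binomK (0 : K) n = (n == 0)%:R.
Proof.
case: n => [|n]; first by rewrite binomK_Pf /Pf big_ord0 fact0 divr1.
rewrite binomK_Pf -add1n Pf_add /Pf big_ord1 subrr !mul0r.
by [].
Qed.


Lemma tri (a : nat -> K) (b : nat -> nat -> K) N :
  \sum_(0 <= k < N) a k * (\sum_(0 <= j < (N - k)%N) b k j) =
  \sum_(0 <= n < N) \sum_(0 <= k < n.+1) a k * b k (n - k)%N.
Proof.
elim: N => [|N IH]; first by rewrite !big_geq.
have e1 : \sum_(0 <= k < N.+1) a k * (\sum_(0 <= j < (N.+1 - k)%N) b k j) =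
   \sum_(0 <= k < N.+1) (a k * (\sum_(0 <= j < (N - k)%N) b k j) + a k * b k (N - k)%N).
  apply: eq_big_nat => k /andP [_ hk]; rewrite ltnS in hk.
  by rewrite (subSn hk) (big_nat_recr _ _ _ (leq0n _)) /= mulrDr.
rewrite e1 big_split /= (big_nat_recr _ _ _ (leq0n N)) /= subnn.
rewrite [\sum_(0 <= j < 0) b N j]big_geq // mulr0 addr0 IH.
by rewrite [RHS](big_nat_recr _ _ _ (leq0n N)).
Qed.

Definition coef y x k : K := (-1) ^+ k * (k`!)%:R * binomK y k * binomK x k.

Lemma abs_coef y x k : Zp y -> Zp x -> abs (coef y x k) <= abs (k`!%:R).
Proof.
move=> hy hx; rewrite /coef 3!absM absX absN abs1 expr1n mul1r.
have h1 := binom_le1 k hy; have h2 := binom_le1 k hx.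
have hb : abs (binomK y k) * abs (binomK x k) <= 1.
  by rewrite -[1]mulr1; apply: ler_pM => //; exact: ge0.
rewrite -mulrA -{2}[abs (k`!%:R)]mulr1; apply: ler_wpM2l => //; exact: ge0.
Qed.

Lemma inner_id y phi x n :
  \sum_(0 <= k < n.+1) coef (- y) x k * S_term y phi (x - k%:R) (n - k)%N =
  (n == 0)%:R * phi x.
Proof.
set C := (-1) ^+ n * Pf x n * phi (x - n%:R).
have e : forall k, (0 <= k < n.+1)%N -> coef (- y) x k * S_term y phi (x - k%:R) (n - k)%N =
    C * (binomK (- y) k * binomK y (n - k)%N).
  move=> k /andP [_ hk]; rewrite ltnS in hk.
  have hP : Pf x n = Pf x k * Pf (x - k%:R) (n - k)%N by rewrite -Pf_add subnKC.
  have hs : (-1) ^+ n = (-1) ^+ k * (-1) ^+ (n - k)%N :> K by rewrite -exprD subnKC.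
  have hx : x - k%:R - (n - k)%N%:R = x - n%:R by rewrite natrB //; ring.
  rewrite /C /coef /S_term hx hP hs -(fact_binom x k) -(fact_binom (x - k%:R) (n - k)%N); ring.
rewrite (eq_big_nat _ _ e) -big_distrr /= binom_vander addNr binom0 /C.
case: n {C e} => [|n] /=; last by rewrite !mulr0 mul0r.
by rewrite expr0 /Pf big_ord0 subr0 !mul1r mulr1.
Qed.

Lemma S_inv y phi : Zp y -> cont_Zp abs phi ->
  forall x, Zp x -> S_op abs (- y) (S_op abs y phi) x = phi x.
Proof.
move=> hy hc x hx.
have [M [M0 hM]] := cont_bnd hc.
set g := S_op abs y phi.
have hg : bnd g M by move=> z hz; exact: S_bound.
have hny : Zp (- y) by exact: ZpN.
have [hconv _] := S_conv hny hx hg M0.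
apply: (convK_uniq hconv) => e e0.
have [N0 hN0] := fact_smallM M0 e0.
have hN : forall m, (N0 <= m)%N -> abs (m`!%:R) * M < e.
  move=> m hm; apply: le_lt_trans hN0; apply: ler_wpM2r => //; exact: abs_fact_mono.
exists (2 * N0).+1 => n hn.
have hS : forall z m, S_partial y phi z m = \sum_(0 <= j < m) S_term y phi z j.
  by move=> z m; rewrite /S_partial big_mkord.
have hV : \sum_(0 <= k < n) coef (- y) x k * S_partial y phi (x - k%:R) (n - k)%N = phi x.
  rewrite (eq_big_nat _ _ (fun k _ => congr1 (fun t => coef (- y) x k * t) (hS _ _))).
  rewrite tri (eq_big_nat _ _ (fun k _ => inner_id y phi x k)).
  case: n hn => [//|n] _.
  rewrite (big_nat_recl _ _ _ (leq0n n)) /= mul1r big1 ?addr0 // => i _.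
  by rewrite mul0r.
have -> : S_partial (- y) g x n - phi x =
    \sum_(0 <= k < n) coef (- y) x k * (g (x - k%:R) - S_partial y phi (x - k%:R) (n - k)%N).
  rewrite -hV /S_partial -(big_mkord xpredT (S_term (- y) g x)) -sumrB; apply: eq_big_nat => k _.
  by rewrite mulrBr.
rewrite big_nat_cond; apply: abs_sum_lt => // k /andP [/andP [_ hk] _].
have hxk := ZpB hx (Zp_nat k).
have [_ hb] := S_conv hy hxk hM M0.
rewrite absM.
have h1 := abs_coef k hny hx.
have h2 : abs (g (x - k%:R) - S_partial y phi (x - k%:R) (n - k)%N) <=
    abs ((n - k)%N`!%:R) * M := hb (n - k)%N.
have hf1 : abs (k`!%:R) <= 1 by exact: abs_natr.
have hf2 : abs ((n - k)%N`!%:R) <= 1 by exact: abs_natr.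
have g3 := ge0 (k`!%:R); have g4 := ge0 ((n - k)%N`!%:R).
have h3 : abs (coef (- y) x k) * abs (g (x - k%:R) - S_partial y phi (x - k%:R) (n - k)%N)
   <= abs (k`!%:R) * (abs ((n - k)%N`!%:R) * M).
  by apply: ler_pM => //; exact: ge0.
apply: le_lt_trans h3 _.
have hM1 : abs ((n - k)%N`!%:R) * M <= M by have := M0; nra.
case: (leqP N0 k) => hk0.
  have := hN k hk0.
  have : abs (k`!%:R) * (abs ((n - k)%N`!%:R) * M) <= abs (k`!%:R) * M by apply: ler_wpM2l.
  lra.
have : (N0 <= n - k)%N by lia.
move=> /hN; rewrite mulrA.
have : abs (k`!%:R) * abs ((n - k)%N`!%:R) * M <= abs ((n - k)%N`!%:R) * M.
  apply: ler_wpM2r => //; nra.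
lra.
Qed.


Lemma convK_lin a u v l1 l2 : convK abs u l1 -> convK abs v l2 ->
  convK abs (fun n => a * u n + v n) (a * l1 + l2).
Proof.
move=> h1 h2 e e0.
have ea : 0 < e / (abs a + 1) by apply: divr_gt0 => //; have := ge0 a; lra.
have [N1 hN1] := h1 _ ea; have [N2 hN2] := h2 _ e0.
exists (maxn N1 N2) => n hn.
have -> : a * u n + v n - (a * l1 + l2) = a * (u n - l1) + (v n - l2) by ring.
apply: ultra_lt; last by apply: hN2; exact: leq_trans (leq_maxr _ _) hn.
rewrite absM.
have h := hN1 n (leq_trans (leq_maxl _ _) hn).
move: h; rewrite ltr_pdivlMr; last by have := ge0 a; lra.
have := ge0 a; have := ge0 (u n - l1); nra.
Qed.

Lemma S_lin y a phi psi x : Zp y -> Zp x -> cont_Zp abs phi -> cont_Zp abs psi ->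
  S_op abs y (fun t => a * phi t + psi t) x = a * S_op abs y phi x + S_op abs y psi x.
Proof.
move=> hy hx hc1 hc2.
have [M1 [M10 hM1]] := cont_bnd hc1; have [M2 [M20 hM2]] := cont_bnd hc2.
have [c1 _] := S_conv hy hx hM1 M10; have [c2 _] := S_conv hy hx hM2 M20.
have hl := convK_lin a c1 c2.
have he : S_partial y (fun t => a * phi t + psi t) x =
    (fun n => a * S_partial y phi x n + S_partial y psi x n).
  apply: funext => n; rewrite /S_partial big_distrr -big_split /=.
  by apply: eq_bigr => k _; rewrite /S_term; ring.
have hS := conv_eps (l := a * S_op abs y phi x + S_op abs y psi x) (u := S_partial y (fun t => a * phi t + psi t) x).
rewrite he in hS; have := hS hl.
move=> h; symmetry; apply: convK_uniq hl _.
by rewrite /S_op he.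
Qed.

Lemma sup_ge0_bnd phi M : bnd phi M ->
  bnd phi (supnorm abs phi) /\ 0 <= supnorm abs phi.
Proof.
move=> hM.
have hub : has_ubound [set abs (phi x) | x in Zp] by exists M => _ [x hx <-]; exact: hM.
have hb : bnd phi (supnorm abs phi).
  by move=> x hx; apply: ub_le_sup => //; exists x.
split => //; apply: le_trans (hb 0 (Zp_nat 0)); exact: ge0.
Qed.

Lemma supnorm_le phi psi : (exists M, bnd phi M) -> bnd psi (supnorm abs phi) ->
  supnorm abs psi <= supnorm abs phi.
Proof.
move=> _ h; apply: ge_sup.
  by exists (abs (psi 0)); exists 0 => //; exact: (Zp_nat 0).
by move=> _ [x hx <-]; exact: h.
Qed.

Lemma S_supnorm y phi : Zp y -> cont_Zp abs phi ->
  supnorm abs (S_op abs y phi) = supnorm abs phi.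
Proof.
move=> hy hc.
have [M [M0 hM]] := cont_bnd hc.
have [hbA hA0] := sup_ge0_bnd hM.
have hSA : bnd (S_op abs y phi) (supnorm abs phi) by move=> x hx; exact: S_bound.
have [hbB hB0] := sup_ge0_bnd hSA.
apply: le_anti; apply/andP; split.
  by apply: supnorm_le => //; exists M.
apply: supnorm_le; first by exists (supnorm abs phi).
move=> x hx; rewrite -(S_inv hy hc hx).
apply: S_bound => //; exact: ZpN.
Qed.

End Padic.

Unset Implicit Arguments.

Theorem corollary6p4 (p : nat) (R : realType) (K : closedFieldType) (abs : K -> R) :
  prime p -> padic_abs abs p ->
  forall y : K, Zp_set abs y ->
  (forall phi : K -> K, cont_Zp abs phi ->
     [/\ forall x, Zp_set abs x -> convK abs (S_partial y phi x) (S_op abs y phi x),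
         cont_Zp abs (S_op abs y phi),
         supnorm abs (S_op abs y phi) = supnorm abs phi,
         forall x, Zp_set abs x -> S_op abs (- y) (S_op abs y phi) x = phi x &
         forall x, Zp_set abs x -> S_op abs y (S_op abs (- y) phi) x = phi x]) /\
  (forall (a : K) (phi psi : K -> K), cont_Zp abs phi -> cont_Zp abs psi ->
     forall x, Zp_set abs x ->
       S_op abs y (fun t => a * phi t + psi t) x = a * S_op abs y phi x + S_op abs y psi x).
Proof.
move=> hp ha y hy; split; last first.
  move=> a phi psi h1 h2 x hx; exact: (S_lin hp ha a hy hx h1 h2).
move=> phi hc.
have [M [M0 hM]] := cont_bnd hp ha hc.
split.
- move=> x hx; exact: (proj1 (S_conv hp ha hy hx hM M0)).
- exact: (S_cont hp ha hy hM M0 hc).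
- exact: (S_supnorm hp ha hy hc).
- move=> x hx; exact: (S_inv hp ha hy hc hx).
- move=> x hx.
  have := S_inv hp ha (ZpN ha hy) hc hx.
  by rewrite opprK.
Qed.
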